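(* In the Classified Reallocation algorithm (with power-of-two laxities), in any round, the number of clients reallocated out of the big channel during the processing of that round's arrival is at most half of the number of clients active in the system at that round.
   Context: Model: discrete time; each client $c_i$ has arrival time, departure time and laxity $w_i$ (a power of $2$), and must transmit at least once in every $w_i$ consecutive time steps while active; one transmission per channel per time step. A round is the period between consecutive events, each round containing exactly one arrival or departure. A reallocation is a change of the channel of a client. For $x>0$, $\lceil\lceil x\rceil\rceil$ denotes the smallest power of $2$ not smaller than $x$. Classified Reallocation algorithm. Channels: one \emph{big channel} (all its clients transmit with period $\tau/2$) and \emph{$w$-channels} for powers of two $w$ (clients transmit with period $w$; at most $w$ clients; \emph{full} when holding $w$). State: $n$ (active clients, initially $0$), threshold $\tau$ (initially $2$). Arrival of $c_i$: $n\leftarrow n+1$. If $2\lceil\lceil n\rceil\rceil>\tau$: $\tau\leftarrow 2\lceil\lceil n\rceil\rceil$; each big-channel client $c_j$ with $w_j<\tau/2$ is reallocated to the non-full $w_j$-channel of minimum load (a new one reserved if needed); remaining big-channel clients get period $\tau/2$. Then if $w_i\ge\tau$, $c_i$ goes to the big channel; otherwise to the non-full $w_i$-channel of minimum load (new one reserved if needed). Departure of $c_i$ from channel $c$: $n\leftarrow n-1$. If $c$ is not the big channel: release $c$ if empty; otherwise if some $w_i$-channel $c'\ne c$ is not full, move one client from $c'$ to $c$. Then if $2\lceil\lceil n\rceil\rceil<\tau$: $\tau\leftarrow 2\lceil\lceil n\rceil\rceil$, big-channel clients get period $\tau/2$, and every $w$-channel with $w>2\tau$ has all its clients reallocated to the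 big channel and is released. *)

(* Defs.v *)
From mathcomp Require Import all_boot.
Set Implicit Arguments. Unset Strict Implicit. Unset Printing Implicit Defensive.

Definition client := (nat * nat)%type.
Definition cid (c : client) : nat := c.1.
Definition laxity (c : client) : nat := 2 ^ c.2.

(* A w-channel: (e, clients) is a (2^e)-channel holding the listed clients. *)
Definition wchan := (nat * seq client)%type.
Definition wchan_full (ch : wchan) : bool := size ch.2 >= 2 ^ ch.1.

(* ceil2 x = smallest power of 2 not smaller than x (ceil2 0 = 1). *)
Definition ceil2 (x : nat) : nat := 2 ^ (up_log 2 x).

Record state := State {
  nact : nat;
  tau  : nat;
  big  : seq client;
  chans : seq wchan
}.

Definition init_state : state := State 0 2 [::] [::].

Inductive event := Arrive of nat & nat (* id, laxity exponent *) | Depart of nat.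

Definition dflt_chan : wchan := (0, [::]).
Definition load (cs : seq wchan) (i : nat) : nat := size (nth dflt_chan cs i).2.

Definition nonfull_idx (cs : seq wchan) (e : nat) : seq nat :=
  [seq i <- iota 0 (size cs) |
     ((nth dflt_chan cs i).1 == e) && ~~ wchan_full (nth dflt_chan cs i)].

Definition pick_min (cs : seq wchan) (l : seq nat) : option nat :=
  match l with
  | [::] => None
  | i :: l' => Some (foldl (fun b j => if load cs j < load cs b then j else b) i l')
  end.

Definition insert_client (cs : seq wchan) (c : client) : seq wchan :=
  match pick_min cs (nonfull_idx cs c.2) with
  | Some i => set_nth dflt_chan cs i (c.2, rcons (nth dflt_chan cs i).2 c)
  | None => rcons cs (c.2, [:: c])
  end.

Definition remove_at (T : Type) (s : seq T) (i : nat) : seq T :=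
  take i s ++ drop i.+1 s.

Definition arrive (s : state) (c : client) : state :=
  let n' := (nact s).+1 in
  let '(t', b1, cs1) :=
    if 2 * ceil2 n' > tau s then
      let t' := 2 * ceil2 n' in
      let moved := [seq d <- big s | laxity d < t' %/ 2] in
      let stay  := [seq d <- big s | ~~ (laxity d < t' %/ 2)] in
      (t', stay, foldl insert_client (chans s) moved)
    else (tau s, big s, chans s) in
  if laxity c >= t' then State n' t' (rcons b1 c) cs1
  else State n' t' b1 (insert_client cs1 c).

Definition depart_tau (s : state) : state :=
  let n := nact s in
  if 2 * ceil2 n < tau s then
    let t' := 2 * ceil2 n in
    let isbig (ch : wchan) := 2 ^ ch.1 > 2 * t' in
    State n t' (big s ++ flatten [seq ch.2 | ch <- chans s & isbig ch])
          [seq ch <- chans s | ~~ isbig ch]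
  else s.

Definition depart (s : state) (i : nat) : state :=
  let n' := (nact s).-1 in
  if has (fun d => cid d == i) (big s) then
    depart_tau (State n' (tau s) [seq d <- big s | cid d != i] (chans s))
  else
    let cs := chans s in
    let k := find (fun ch : wchan => has (fun d => cid d == i) ch.2) cs in
    let ch := nth dflt_chan cs k in
    let ch1 := (ch.1, [seq d <- ch.2 | cid d != i]) in
    let cs1 :=
      if k >= size cs then cs
      else if nilp ch1.2 then remove_at cs k
      else
        let cand := [seq j <- nonfull_idx cs ch.1 | j != k] in
        match cand with
        | [::] => set_nth dflt_chan cs k ch1
        | j :: _ =>
            let chj := nth dflt_chan cs j in
            match chj.2 with
            | [::] => set_nth dflt_chan cs k ch1
            | d :: rest =>
                set_nth dflt_chan (set_nth dflt_chan cs k (ch1.1, rcons ch1.2 d))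
                        j (chj.1, rest)
            end
        end in
    depart_tau (State n' (tau s) (big s) cs1).

Definition step (s : state) (ev : event) : state :=
  match ev with
  | Arrive i e => arrive s (i, e)
  | Depart i => depart s i
  end.

Definition run (es : seq event) : state := foldl step init_state es.

Fixpoint valid_from (act : seq nat) (es : seq event) : bool :=
  match es with
  | [::] => true
  | Arrive i _ :: es' => (i \notin act) && valid_from (i :: act) es'
  | Depart i :: es' => (i \in act) && valid_from (rem i act) es'
  end.

Definition valid (es : seq event) : bool := valid_from [::] es.

Definition moved_out_of_big (s s' : state) : nat :=
  count (fun d => d \notin big s') (big s).

(* Main.v *)
Require Import Defs.
From mathcomp Require Import all_boot.
From mathcomp Require Import zify.
Set Implicit Arguments. Unset Strict Implicit.

Lemma ceil2_ge n : n <= ceil2 n.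
Proof. exact: up_logP. Qed.

Lemma ceil2_min n k : n <= 2 ^ k -> ceil2 n <= 2 ^ k.
Proof. by move=> h; rewrite /ceil2 leq_pexp2l // up_log_min. Qed.

Lemma ceil2_mono m n : m <= n -> ceil2 m <= ceil2 n.
Proof. by move=> h; rewrite /ceil2 leq_pexp2l // leq_up_log. Qed.

Lemma ceil2_gt0 n : 0 < ceil2 n.
Proof. by rewrite /ceil2 expn_gt0. Qed.

Lemma ceil2_S n : ceil2 n.+1 <= 2 * ceil2 n.
Proof.
rewrite /ceil2 -expnS; apply: ceil2_min; rewrite expnS.
case: n => [|n] //; have := ceil2_ge n.+1; rewrite /ceil2; lia.
Qed.

Lemma ceil2_lt a b : ceil2 a < ceil2 b -> 2 * ceil2 a <= ceil2 b.
Proof. by rewrite /ceil2 -expnS !ltn_exp2l // leq_exp2l. Qed.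

Lemma ceil2_inc n : ceil2 n < ceil2 n.+1 -> ceil2 n <= n.
Proof.
move=> h; rewrite leqNgt; apply/negP=> h2.
have : ceil2 n.+1 <= ceil2 n by apply: ceil2_min.
by rewrite leqNgt h.
Qed.
Definition flat (cs : seq wchan) : seq client := flatten (map snd cs).
Definition chan_ok (ch : wchan) : bool := all (fun d : client => d.2 == ch.1) ch.2.

Lemma all_set_nth (T : Type) (P : pred T) x0 (s : seq T) i x :
  P x0 -> all P s -> P x -> all P (set_nth x0 s i x).
Proof.
move=> P0; elim: s i => [|a s IH] [|i] //=.
- by move=> _ ->.
- by move=> _ Px; elim: i => [|i] /=; rewrite P0 //= Px.
- by move=> /andP[_ ->] ->.
- by move=> /andP[-> h] Px /=; apply: IH.
Qed.

Lemma all_nth (T : Type) (P : pred T) x0 (s : seq T) i :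
  P x0 -> all P s -> P (nth x0 s i).
Proof.
move=> P0; elim: s i => [|a s IH] [|i] //= /andP[h1 h2] //; exact: IH.
Qed.

Lemma flat_set_nth cs i x : i < size cs ->
  perm_eq (flat (set_nth dflt_chan cs i x) ++ (nth dflt_chan cs i).2)
          (x.2 ++ flat cs).
Proof.
elim: cs i => [|c cs IH] [|i] //=.
- by move=> _; rewrite /flat /= -catA perm_cat2l perm_catC.
- move=> hi; rewrite /flat /= -!/(flat _) -catA.
  apply: (@perm_trans _ (c.2 ++ x.2 ++ flat cs)); last by rewrite perm_catCA.
  by rewrite perm_cat2l IH.
Qed.

Lemma flat_remove cs k : k < size cs ->
  perm_eq (flat (remove_at cs k) ++ (nth dflt_chan cs k).2) (flat cs).
Proof.
move=> hk; rewrite /remove_at.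
have -> : flat cs = flat (take k cs) ++ (nth dflt_chan cs k).2 ++ flat (drop k.+1 cs).
  by rewrite -{1}(cat_take_drop k cs) (drop_nth dflt_chan hk) /flat map_cat flatten_cat.
rewrite /flat map_cat flatten_cat -catA perm_cat2l perm_catC //.
Qed.

Lemma all_drop' (T : Type) (P : pred T) (s : seq T) n : all P s -> all P (drop n s).
Proof. by rewrite -{1}(cat_take_drop n s) all_cat => /andP[]. Qed.

Lemma all_take' (T : Type) (P : pred T) (s : seq T) n : all P s -> all P (take n s).
Proof. by rewrite -{1}(cat_take_drop n s) all_cat => /andP[]. Qed.

Lemma all_remove (T : Type) (P : pred T) (s : seq T) k :
  all P s -> all P (remove_at s k).
Proof. by move=> h; rewrite /remove_at all_cat all_take' ?all_drop'. Qed.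

Lemma foldl_min_mem cs (a : nat) l :
  foldl (fun b j => if load cs j < load cs b then j else b) a l \in a :: l.
Proof.
elim: l a => [|b l IH] a /=; first by rewrite inE.
have := IH (if load cs b < load cs a then b else a).
case: ifP => _; rewrite !inE.
- by case/orP=> ->; rewrite ?orbT.
- by case/orP=> ->; rewrite ?orbT.
Qed.

Lemma pick_min_mem cs l i : pick_min cs l = Some i -> i \in l.
Proof. by case: l => //= a l [<-]; apply: foldl_min_mem. Qed.

Lemma nonfull_mem cs e i : i \in nonfull_idx cs e ->
  i < size cs /\ (nth dflt_chan cs i).1 = e.
Proof. by rewrite mem_filter mem_iota add0n => /andP[/andP[/eqP -> _] /andP[_ ->]]. Qed.

Lemma perm_cancel_r (s1 s2 t : seq client) :
  perm_eq (s1 ++ t) (s2 ++ t) -> perm_eq s1 s2.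
Proof. by rewrite perm_cat2r. Qed.

Lemma ins_perm cs c : perm_eq (flat (insert_client cs c)) (c :: flat cs).
Proof.
rewrite /insert_client; case E: pick_min => [i|].
- have [hi _] := nonfull_mem (pick_min_mem E).
  have h := flat_set_nth (c.2, rcons (nth dflt_chan cs i).2 c) hi.
  apply: (@perm_cancel_r _ _ (nth dflt_chan cs i).2).
  apply: (perm_trans h) => /=.
  by rewrite -cats1 -catA perm_catC.
- by rewrite /flat -cats1 map_cat flatten_cat /= perm_catC.
Qed.

Lemma ins_ok cs c : all chan_ok cs -> all chan_ok (insert_client cs c).
Proof.
move=> h; rewrite /insert_client; case E: pick_min => [i|].
- have [hi he] := nonfull_mem (pick_min_mem E).
  apply: all_set_nth => //.
  have := @all_nth _ chan_ok dflt_chan cs i isT h.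
  by rewrite /chan_ok /= all_rcons eqxx he.
- by rewrite all_rcons /= /chan_ok /= eqxx h.
Qed.

Lemma fold_ins_perm ms cs :
  perm_eq (flat (foldl insert_client cs ms)) (ms ++ flat cs).
Proof.
elim: ms cs => [|m ms IH] cs //=.
apply: (perm_trans (IH _)).
apply: (@perm_trans _ (ms ++ m :: flat cs)); first by rewrite perm_cat2l ins_perm.
by rewrite -cat1s perm_catCA.
Qed.

Lemma fold_ins_ok ms cs : all chan_ok cs -> all chan_ok (foldl insert_client cs ms).
Proof. by elim: ms cs => [|m ms IH] cs //= h; apply/IH/ins_ok. Qed.

Definition allc (s : state) : seq client := big s ++ flat (chans s).

Record Inv (s : state) (act : seq nat) : Prop := MkInv {
  inv_tau : tau s = 2 * ceil2 (nact s);
  inv_size : size (allc s) <= nact s;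
  inv_act : {subset act <= map cid (allc s)};
  inv_big : all (fun d => tau s <= 2 * laxity d) (big s);
  inv_cnt : 4 * count (fun d => laxity d < tau s) (big s) <= tau s;
  inv_ch : all chan_ok (chans s) }.

Lemma permH1 (b F X : seq client) c : perm_eq (b ++ F) X -> perm_eq (rcons b c ++ F) (c :: X).
Proof.
move=> h; rewrite -cats1 -catA; apply: (@perm_trans _ (c :: b ++ F)).
  by rewrite -cat1s perm_catCA.
by rewrite perm_cons.
Qed.

Lemma permH2 (b X : seq client) cs c : perm_eq (b ++ flat cs) X ->
  perm_eq (b ++ flat (insert_client cs c)) (c :: X).
Proof.
move=> h; apply: (@perm_trans _ (b ++ c :: flat cs)); first by rewrite perm_cat2l ins_perm.
apply: (@perm_trans _ (c :: b ++ flat cs)); first by rewrite -cat1s perm_catCA.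
by rewrite perm_cons.
Qed.

Lemma permH3 (p : pred client) b cs :
  perm_eq ([seq d <- b | ~~ p d] ++ flat (foldl insert_client cs [seq d <- b | p d])) (b ++ flat cs).
Proof.
apply: (@perm_trans _ ([seq d <- b | ~~ p d] ++ [seq d <- b | p d] ++ flat cs)).
  by rewrite perm_cat2l fold_ins_perm.
rewrite catA perm_cat2r perm_catC.
by apply/permPl; exact: (perm_filterC p b).
Qed.

Lemma arrive_perm s c : perm_eq (allc (arrive s c)) (c :: allc s).
Proof.
rewrite /arrive /allc; case: ifP => hinc /=; case: ifP => hc /=.
- by apply: permH1; apply: permH3.
- by apply: permH2; apply: permH3.
- by apply: permH1.
- by apply: permH2.
Qed.

Lemma half2 x : (2 * x) %/ 2 = x.
Proof. by rewrite mulKn. Qed.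

Lemma count_le_size (T : Type) (p : pred T) (s : seq T) : count p s <= size s.
Proof. exact: count_size. Qed.

Lemma arrive_inv s act i e : Inv s act -> Inv (arrive s (i, e)) (i :: act).
Proof.
case=> Htau Hsize Hact Hbig Hcnt Hch.
have Hp := arrive_perm s (i, e).
have Hsz : size (big s) <= nact s.
  by apply: leq_trans Hsize; rewrite /allc size_cat leq_addr.
split.
- rewrite /arrive; case: ifP => hinc /=; case: ifP => hc //=.
  + have := negbT hinc; rewrite -leqNgt => h1.
    by apply/eqP; rewrite eqn_leq h1 andbT Htau leq_mul2l ceil2_mono.
  + have := negbT hinc; rewrite -leqNgt => h1.
    by apply/eqP; rewrite eqn_leq h1 andbT Htau leq_mul2l ceil2_mono.
- rewrite (perm_size Hp) /=.
  have -> : nact (arrive s (i, e)) = (nact s).+1.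
    by rewrite /arrive; case: ifP => _ /=; case: ifP.
  by [].
- move=> x; rewrite inE => /orP [/eqP -> | hx].
  + by rewrite (perm_mem (perm_map cid Hp)) /= inE eqxx.
  + by rewrite (perm_mem (perm_map cid Hp)) /= inE (Hact _ hx) orbT.
- rewrite /arrive; case: ifP => hinc /=; case: ifP => hc /=.
  + rewrite all_rcons (leq_trans hc) ?leq_pmull //=.
    by apply/allP => d; rewrite mem_filter half2 -leqNgt leq_mul2l => /andP[-> _]; rewrite orbT.
  + by apply/allP => d; rewrite mem_filter half2 -leqNgt leq_mul2l => /andP[-> _]; rewrite orbT.
  + by rewrite all_rcons Hbig andbT (leq_trans hc) // leq_pmull.
  + exact: Hbig.
- have Hinc : tau s < 2 * ceil2 (nact s).+1 -> 4 * size (big s) <= 2 * ceil2 (nact s).+1.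
    rewrite Htau ltn_mul2l /= => h.
    have h1 := ceil2_inc h; have h2 := ceil2_ge (nact s); have h3 := ceil2_lt h.
    lia.
  have Hst : forall t, count (fun d => laxity d < t) [seq d <- big s | ~~ (laxity d < t %/ 2)] <= size (big s).
    move=> t; apply: leq_trans (count_size _ _) _; rewrite size_filter; exact: count_size.
  rewrite /arrive; case: ifP => hinc /=; case: ifP => hc /=.
  + rewrite -cats1 count_cat /= ltnNge hc /= addn0.
    apply: leq_trans (Hinc hinc); rewrite leq_mul2l /= addn0; exact: Hst.
  + apply: leq_trans (Hinc hinc); rewrite leq_mul2l /=; exact: Hst.
  + by rewrite -cats1 count_cat /= ltnNge hc /= addn0 addn0.
  + exact: Hcnt.
- rewrite /arrive; case: ifP => hinc /=; case: ifP => hc /=.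
  + exact: fold_ins_ok.
  + exact/ins_ok/fold_ins_ok.
  + exact: Hch.
  + exact: ins_ok.
Qed.

Lemma sub_in_count (T : eqType) (a1 a2 : pred T) (s : seq T) :
  {in s, forall x, a1 x -> a2 x} -> count a1 s <= count a2 s.
Proof.
elim: s => //= x s IH h.
apply: leq_add; last by apply: IH => y hy; apply: h; rewrite inE hy orbT.
by case h1: (a1 x) => //=; rewrite (h x) // inE eqxx.
Qed.

Lemma arrive_bound s act c : Inv s act ->
  2 * moved_out_of_big s (arrive s c) <= nact (arrive s c).
Proof.
case=> Htau Hsize Hact Hbig Hcnt Hch.
have Hn : nact (arrive s c) = (nact s).+1.
  by rewrite /arrive; case: ifP => _ /=; case: ifP.
rewrite Hn /moved_out_of_big /arrive; case: ifP => hinc /=.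
- set t' := 2 * ceil2 (nact s).+1.
  have h2 : 4 * count (fun d => laxity d < tau s) (big s) <= 2 * nact s.
    apply: leq_trans Hcnt _; rewrite Htau leq_mul2l /=.
    by apply: ceil2_inc; rewrite Htau ltn_mul2l /= in hinc.
  apply: (@leq_trans (2 * count (fun d => laxity d < tau s) (big s))); last by lia.
    rewrite leq_mul2l /=.
    apply: (@leq_trans (count (fun d => laxity d < t' %/ 2) (big s))).
      apply: sub_in_count => d hd /=; rewrite -[laxity d < _]negbK; apply: contra => hl.
      by case: ifP => _ /=; rewrite ?mem_rcons ?inE mem_filter hl hd ?orbT.
    apply: sub_count => d /= hl; apply: leq_trans hl _.
    by rewrite /t' half2 Htau ceil2_S.
- rewrite (_ : count _ (big s) = 0) //.
  apply/eqP; rewrite eqn0Ngt -has_count; apply/hasPn => d hd.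
  by case: ifP => _ /=; rewrite negbK ?mem_rcons ?inE hd ?orbT.
Qed.

Lemma flat_filter (p : pred wchan) cs :
  perm_eq (flatten [seq ch.2 | ch <- cs & p ch] ++ flat [seq ch <- cs | ~~ p ch]) (flat cs).
Proof.
rewrite /flat -flatten_cat -map_cat.
by apply/perm_flatten/perm_map; apply/permPl; exact: (perm_filterC p cs).
Qed.

Lemma depart_tau_inv s0 m act :
  nact s0 <= m -> tau s0 = 2 * ceil2 m ->
  size (allc s0) <= nact s0 -> {subset act <= map cid (allc s0)} ->
  all (fun d => tau s0 <= 2 * laxity d) (big s0) ->
  4 * count (fun d => laxity d < tau s0) (big s0) <= tau s0 ->
  all chan_ok (chans s0) ->
  Inv (depart_tau s0) act.
Proof.
move=> Hm Htau Hsize Hact Hbig Hcnt Hch.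
rewrite /depart_tau; case: ifP => hdec.
- set t' := 2 * ceil2 (nact s0).
  set isbig := fun ch : wchan => 2 * t' < 2 ^ ch.1.
  have Hp : perm_eq (allc (State (nact s0) t' (big s0 ++ flatten [seq ch.2 | ch <- chans s0 & isbig ch])
                [seq ch <- chans s0 | ~~ isbig ch])) (allc s0).
    by rewrite /allc /= -catA perm_cat2l flat_filter.
  have H2 : 2 * t' <= tau s0.
    rewrite /t' Htau leq_mul2l /=; apply: ceil2_lt.
    by move: hdec; rewrite /t' Htau ltn_mul2l.
  have Hl : forall d, d \in big s0 ++ flatten [seq ch.2 | ch <- chans s0 & isbig ch] -> t' <= laxity d.
    move=> d; rewrite mem_cat => /orP [hd | /flatten_mapP [ch]].
      have := allP Hbig d hd; move: H2; lia.
    rewrite mem_filter => /andP [hb hch] hd.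
    have := allP (allP Hch ch hch) d hd => /eqP he.
    by rewrite /laxity he; move: hb; rewrite /isbig; lia.
  split => //=.
  + by rewrite (perm_size Hp).
  + by move=> x /Hact; rewrite (perm_mem (perm_map cid Hp)).
  + by apply/allP => d /Hl; lia.
  + rewrite (_ : count _ _ = 0) //; apply/eqP; rewrite eqn0Ngt -has_count.
    by apply/hasPn => d /Hl; rewrite -leqNgt.
  + by apply/allP => ch; rewrite mem_filter => /andP [_ /(allP Hch)].
- split => //.
  apply/eqP; rewrite eqn_leq leqNgt hdec Htau leq_mul2l ceil2_mono //.
Qed.

Definition dep_cs (cs : seq wchan) (i : nat) : seq wchan :=
    let k := find (fun ch : wchan => has (fun d => cid d == i) ch.2) cs in
    let ch := nth dflt_chan cs k in
    let ch1 := (ch.1, [seq d <- ch.2 | cid d != i]) in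
      if k >= size cs then cs
      else if nilp ch1.2 then remove_at cs k
      else
        let cand := [seq j <- nonfull_idx cs ch.1 | j != k] in
        match cand with
        | [::] => set_nth dflt_chan cs k ch1
        | j :: _ =>
            let chj := nth dflt_chan cs j in
            match chj.2 with
            | [::] => set_nth dflt_chan cs k ch1
            | d :: rest =>
                set_nth dflt_chan (set_nth dflt_chan cs k (ch1.1, rcons ch1.2 d))
                        j (chj.1, rest)
            end
        end.

Lemma depart_eq s i : depart s i =
  if has (fun d => cid d == i) (big s) then
    depart_tau (State (nact s).-1 (tau s) [seq d <- big s | cid d != i] (chans s))
  else depart_tau (State (nact s).-1 (tau s) (big s) (dep_cs (chans s) i)).
Proof. by []. Qed.

Lemma chan_ok_filter (ch : wchan) (p : pred client) : chan_ok ch -> chan_ok (ch.1, [seq d <- ch.2 | p d]).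
Proof. by move=> h; apply/allP => d; rewrite mem_filter => /andP [_ /(allP h)]. Qed.

Lemma dep_cs_ok cs i :
  let k := find (fun ch : wchan => has (fun d => cid d == i) ch.2) cs in
  let ch := nth dflt_chan cs k in
  k < size cs -> all chan_ok cs ->
  perm_eq (flat (dep_cs cs i) ++ ch.2) ([seq d <- ch.2 | cid d != i] ++ flat cs) /\
  all chan_ok (dep_cs cs i).
Proof.
move=> k ch hk hok.
have chok : chan_ok ch by exact: all_nth.
rewrite /dep_cs -/k -/ch leqNgt hk /=.
case: ifP => hnil.
- move/nilP: hnil => ->; split; first exact: flat_remove.
  exact: all_remove.
case E: [seq j <- nonfull_idx cs ch.1 | j != k] => [|j l].
- by split; [apply: flat_set_nth | apply: all_set_nth => //; apply: chan_ok_filter].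
have hj : j \in [seq j <- nonfull_idx cs ch.1 | j != k] by rewrite E mem_head.
move: hj; rewrite mem_filter => /andP [hjk /nonfull_mem [hjs hj1]].
set chj := nth dflt_chan cs j.
have chjok : chan_ok chj by exact: all_nth.
case E2: chj.2 => [|d rest].
- by split; [apply: flat_set_nth | apply: all_set_nth => //; apply: chan_ok_filter].
set f := [seq d <- ch.2 | cid d != i].
set cs' := set_nth dflt_chan cs k (ch.1, rcons f d).
have h1 := flat_set_nth (ch.1, rcons f d) hk.
have hj' : j < size cs' by rewrite /cs' size_set_nth; apply: leq_trans hjs (leq_maxr _ _).
have h2 := flat_set_nth (chj.1, rest) hj'.
have hn : nth dflt_chan cs' j = chj by rewrite /cs' nth_set_nth /= (negbTE hjk).
rewrite hn E2 in h2.
split.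
- apply/permP => p.
  move/permP: h1 => /(_ p); move/permP: h2 => /(_ p).
  have hr : count p (rcons f d) = count p f + p d by rewrite -cats1 count_cat /= addn0.
  rewrite !count_cat /= hr -/ch -/cs'; case: (p d) => /=; lia.
- apply: all_set_nth => //.
  + apply: all_set_nth => //.
    have hd : d \in chj.2 by rewrite E2 mem_head.
    have /eqP hd2 := allP chjok d hd.
    rewrite /chan_ok /= all_rcons /= hd2 /chj hj1 eqxx /=.
    exact: (chan_ok_filter (fun d => cid d != i) chok).
  + by apply/allP => x hx; apply: (allP chjok); rewrite E2 inE hx orbT.
Qed.

Lemma finish s s0 act i : Inv s act -> uniq act -> nact s0 = (nact s).-1 -> tau s0 = tau s ->
  size (allc s0) < size (allc s) ->
  (forall d, d \in allc s -> cid d != i -> d \in allc s0) ->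
  subseq (big s0) (big s) -> all chan_ok (chans s0) -> Inv (depart_tau s0) (rem i act).
Proof.
case=> Htau Hsize Hact Hbig Hcnt Hch Hu Hn Ht Hsz Hm Hsub Hch0.
apply: (@depart_tau_inv _ (nact s)).
- by rewrite Hn leq_pred.
- by rewrite Ht.
- by rewrite Hn; move: Hsz Hsize; lia.
- move=> j; rewrite mem_rem_uniq // inE => /andP [hji /Hact /mapP [d hd hjd]].
  by apply/mapP; exists d => //; apply: Hm => //; rewrite -hjd.
- by apply/allP => d /(mem_subseq Hsub) /(allP Hbig); rewrite Ht.
- rewrite Ht; apply: leq_trans Hcnt; rewrite leq_mul2l /=; exact: leq_count_subseq.
- exact: Hch0.
Qed.

Lemma count_neq_lt (s : seq client) i :
  has (fun d => cid d == i) s -> count (fun d => cid d != i) s < size s.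
Proof.
move=> h; have E := count_predC (fun d => cid d == i) s.
have E2 : count (predC (fun d => cid d == i)) s = count (fun d => cid d != i) s by [].
rewrite has_count in h; lia.
Qed.

Lemma depart_inv s act i : Inv s act -> uniq act -> i \in act -> Inv (depart s i) (rem i act).
Proof.
move=> HI Hu Hi; have [Htau Hsize Hact Hbig Hcnt Hch] := HI.
rewrite depart_eq; case: ifP => hb.
- apply: (finish HI) => //=.
  + rewrite /allc /= !size_cat ltn_add2r size_filter.
    exact: count_neq_lt.
  + move=> d; rewrite /allc !mem_cat mem_filter => /orP [-> -> | ->] //; rewrite orbT.
  + by [].
  + exact: filter_subseq.
- set cs := chans s.
  set k := find (fun ch : wchan => has (fun d => cid d == i) ch.2) cs.
  set ch := nth dflt_chan cs k.
  have hk : k < size cs.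
    rewrite -has_find; have := Hact _ Hi; rewrite /allc map_cat mem_cat => /orP [].
      by move/mapP => [d hd hdi]; move: hb; rewrite (introT hasP) //; exists d => //; rewrite hdi.
    move/mapP => [d /flatten_mapP [c hc hd] hdi]; apply/hasP; exists c => //.
    by apply/hasP; exists d => //; rewrite hdi.
  have hch : has (fun d => cid d == i) ch.2.
    by have := @nth_find _ dflt_chan (fun ch : wchan => has (fun d => cid d == i) ch.2) cs; rewrite has_find => /(_ hk).
  have [Hp Hok] := dep_cs_ok hk Hch.
  rewrite -/k -/ch in Hp.
  apply: (finish HI) => //=.
  + rewrite /allc /= !size_cat ltn_add2l.
    have := perm_size Hp; rewrite !size_cat => hs.
    have : size [seq d <- ch.2 | cid d != i] < size ch.2.
      by rewrite size_filter; apply: count_neq_lt.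
    move=> hf; rewrite -(ltn_add2r (size ch.2)). by rewrite hs /cs addnC ltn_add2l.
  + move=> d; rewrite /allc !mem_cat => /orP [-> // | hd hdi]; apply/orP; right.
    move/permP: Hp => /(_ (pred1 d)); rewrite !count_cat count_filter.
    rewrite (@eq_count _ (predI (pred1 d) (fun d0 => cid d0 != i)) (pred1 d)); last first.
      by move=> x /=; case: eqP => // ->; rewrite hdi.
    move=> he; rewrite -has_pred1 has_count.
    have : 0 < count (pred1 d) (flat cs) by rewrite -has_count has_pred1.
    move=> h /=; move: he; rewrite addnC => /addnI ->; exact: h.
Qed.

Lemma run_inv es s act : Inv s act -> uniq act -> valid_from act es ->
  exists act', Inv (foldl step s es) act'.
Proof.
elim: es s act => [|[i e|i] es IH] s act HI Hu /=; first by exists act.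
- case/andP => hi hv; apply: (IH _ (i :: act)) => //.
  + exact: arrive_inv.
  + by rewrite /= hi.
- case/andP => hi hv; apply: (IH _ (rem i act)) => //.
  + exact: depart_inv.
  + exact: rem_uniq.
Qed.

Lemma init_inv : Inv init_state [::].
Proof. by split. Qed.

Lemma valid_prefix act a b : valid_from act (a ++ b) -> valid_from act a.
Proof.
elim: a act => [|[i e|i] a IH] act //=; case/andP => -> /IH //.
Qed.

Theorem lemma2 (pre : seq event) (i e : nat) :
  valid (pre ++ [:: Arrive i e]) ->
  let s := run pre in
  let s' := step s (Arrive i e) in
  2 * moved_out_of_big s s' <= nact s'.
Proof.
move=> /valid_prefix hv /=.
have [act HI] := run_inv init_inv (isT : uniq [::]) hv.
exact: arrive_bound HI.
Qed.
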